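(* Suppose the network connectivity assumption and the Poincaré scaling assumption hold, and let $C_\Pi>0$ be a constant (independent of $H$) such that $|v-\Pi_Hv|_M\le C_\Pi H|v|_L$ for all $v\in\hat V$, $H\in\mathcal H$. Let $H\in\mathcal H$, $f\in\hat V$, let $u=\mathcal K^{-1}f$, and let $u_H\in V_H:=\mathcal K^{-1}\mathbb P^0(\mathcal T_H)$ be the Galerkin approximation: $(Ku_H,v_H)=(Mf,v_H)$ for all $v_H\in V_H$. Then $$|u-u_H|_L\le C_\Pi\alpha^{-1}H\,|f-\Pi_Hf|_M\le C_\Pi^2\alpha^{-1}H^2\,|f|_L .$$
   Context: Let $d\in\mathbb N$, $\Omega=[0,1]^d$, and let $\mathcal G=(\mathcal N,\mathcal E)$ be a finite connected graph with at least two nodes, whose nodes $\mathcal N$ are distinct points of $\Omega$. Write $x\sim y$ if $\{x,y\}\in\mathcal E$, and $|x-y|$ for the Euclidean distance. For $\omega\subset\Omega$ let $\mathcal N(\omega)=\mathcal N\cap\omega$. Let $\Gamma\subset\partial\Omega$ with $\mathcal N(\Gamma)\ne\emptyset$. $\hat V$ is the space of real functions on $\mathcal N$ with $(u,v)=\sum_xu(x)v(x)$; $V=\{v\in\hat V:v=0\text{ on }\mathcal N(\Gamma)\}$. Symmetric operators: $(M_xv,w)=\tfrac12\sum_{y\sim x}|x-y|v(x)w(x)$, $(L_xv,w)=\tfrac12\sum_{y\sim x}\frac{(v(x)-v(y))(w(x)-w(y))}{|x-y|}$, $(K_xv,w)=\tfrac12\sum_{y\sim x}\gamma_{xy}\frac{(v(x)-v(y))(w(x)-w(y))}{|x-y|}$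 with $\gamma_{xy}=\gamma_{yx}\in[\alpha,\beta]$, $0<\alpha\le\beta<\infty$; $M=\sum_xM_x$, $L=\sum_xL_x$, $K=\sum_xK_x$; for $\omega\subset\Omega$, $M_\omega=\sum_{x\in\mathcal N(\omega)}M_x$, $L_\omega=\sum_{x\in\mathcal N(\omega)}L_x$. Seminorms $|v|_M^2=(Mv,v)$, $|v|_L^2=(Lv,v)$, $|v|_{M,\omega}^2=(M_\omega v,v)$, $|v|_{L,\omega}^2=(L_\omega v,v)$. The solution operator $\mathcal K^{-1}:\hat V\to V$ maps $f$ to the unique $u\in V$ with $(Ku,v)=(Mf,v)$ for all $v\in V$. Mesh: for $H>0$ with $1/H\in\mathbb N$, $\mathcal T_H$ consists of the cubes $I_1\times\dots\times I_d$, $I_i=[a_i,a_i+H)$, $a_i\in\{0,H,\dots,1-H\}$, except $I_i=[a_i,a_i+H]$ when $a_i+H=1$. $\mathsf N(\omega)$ is the union of all $T\in\mathcal T_H$ with $\overline T\cap\overline\omega\neq\emptyset$. $\mathcal H$ is a finite set of admissible mesh sizes. $\mathbf 1_T$ is the indicator of nodes in $T$; $\mathbb P^0(\mathcal T_H)=\mathrm{span}\{\mathbf 1_T\}$; $\Pi_Hv=\sum_T\frac{(M_Tv,1)}{|1|_{M,T}^2}\mathbf 1_T$ (term $0$ if $T$ has no node). Network connectivity assumption: for every $H\in\mathcal H$ and $T\in\mathcal T_H$ there is a connected subgraph of $\mathcal G$ containing all edges with at least one endpoint in $T$ and only edges with both endpoints in $\mathsf N(T)$. Poincaré scaling assumption: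 there is $\mu>0$ such that for all $H\in\mathcal H$, $T\in\mathcal T_H$, $v\in\hat V$ there exists $c\in\mathbb R$ with $|v-c|_{M,T}\le\mu H|v|_{L,\mathsf N(T)}$. *)

(* Defs.v *)
From HB Require Import structures.
From mathcomp Require Import all_boot all_order all_algebra.
From mathcomp Require Import boolp reals.
Set Implicit Arguments. Unset Strict Implicit. Unset Printing Implicit Defensive.
Import Order.TTheory GRing.Theory Num.Theory.
Local Open Scope ring_scope.

Section Network.
Variables (R : realType) (d : nat) (N : finType) (pos : N -> 'I_d -> R)
  (adj : rel N).

Definition dist (x y : N) : R :=
  Num.sqrt (\sum_(i < d) (pos x i - pos y i) ^+ 2).

Definition Mloc (x : N) (v w : N -> R) : R :=
  2^-1 * \sum_(y | adj x y) dist x y * v x * w x.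
Definition Lloc (x : N) (v w : N -> R) : R :=
  2^-1 * \sum_(y | adj x y) (v x - v y) * (w x - w y) / dist x y.
Definition Kloc (gamma : N -> N -> R) (x : N) (v w : N -> R) : R :=
  2^-1 * \sum_(y | adj x y) gamma x y * (v x - v y) * (w x - w y) / dist x y.

Definition Mform (v w : N -> R) : R := \sum_x Mloc x v w.
Definition Lform (v w : N -> R) : R := \sum_x Lloc x v w.
Definition Kform (gamma : N -> N -> R) (v w : N -> R) : R :=
  \sum_x Kloc gamma x v w.
Definition Mform_on (S : pred N) (v w : N -> R) : R :=
  \sum_(x | S x) Mloc x v w.
Definition Lform_on (S : pred N) (v w : N -> R) : R :=
  \sum_(x | S x) Lloc x v w.

Definition semiM (v : N -> R) : R := Num.sqrt (Mform v v).
Definition semiL (v : N -> R) : R := Num.sqrt (Lform v v).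
Definition semiM_on (S : pred N) (v : N -> R) : R := Num.sqrt (Mform_on S v v).
Definition semiL_on (S : pred N) (v : N -> R) : R := Num.sqrt (Lform_on S v v).

(* Mesh T_H with H = 1/n; cubes are indexed by a : 'I_d -> 'I_n,
   T_a = prod_i I_i with I_i = [a_i H, a_i H + H), closed when a_i H + H = 1,
   i.e. when a_i = n - 1. *)
Definition meshH (n : nat) : R := (n%:R)^-1.

Definition in_cube (n : nat) (a : {ffun 'I_d -> 'I_n}) (z : 'I_d -> R) : bool :=
  [forall i, ((a i)%:R * meshH n <= z i) &&
     (if (a i).+1 == n then z i <= (a i)%:R * meshH n + meshH n
      else z i < (a i)%:R * meshH n + meshH n)].

Definition in_closed_cube (n : nat) (a : {ffun 'I_d -> 'I_n}) (z : 'I_d -> R)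
  : bool :=
  [forall i, ((a i)%:R * meshH n <= z i) &&
             (z i <= (a i)%:R * meshH n + meshH n)].

Definition closures_meet (n : nat) (a b : {ffun 'I_d -> 'I_n}) : Prop :=
  exists z : 'I_d -> R, in_closed_cube a z /\ in_closed_cube b z.

Definition node_in_cube (n : nat) (a : {ffun 'I_d -> 'I_n}) : pred N :=
  fun x => in_cube a (pos x).
Definition node_in_patch (n : nat) (a : {ffun 'I_d -> 'I_n}) : pred N :=
  fun x => [exists b, `[< closures_meet a b >] && in_cube b (pos x)].

Definition indic (n : nat) (a : {ffun 'I_d -> 'I_n}) (x : N) : R :=
  (node_in_cube a x)%:R.

Definition P0 (n : nat) (g : N -> R) : Prop :=
  exists c : {ffun 'I_d -> 'I_n} -> R,
    forall x, g x = \sum_a c a * indic a x.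

Definition PiH (n : nat) (v : N -> R) : N -> R := fun x =>
  \sum_(a : {ffun 'I_d -> 'I_n})
    (if [exists y, node_in_cube a y] then
       Mform_on (node_in_cube a) v (fun _ => 1) /
       Mform_on (node_in_cube a) (fun _ => 1) (fun _ => 1)
     else 0) * indic a x.

Variable Gam : ('I_d -> R) -> Prop.
Definition inV (v : N -> R) : Prop := forall x, Gam (pos x) -> v x = 0.

Definition solves (gamma : N -> N -> R) (f u : N -> R) : Prop :=
  inV u /\ forall v, inV v -> Kform gamma u v = Mform f v.

Definition inVH (gamma : N -> N -> R) (n : nat) (w : N -> R) : Prop :=
  exists g, P0 n g /\ solves gamma g w.

(* Network connectivity assumption; the admissible mesh sizes are H = 1/n, n \in Hs *)
Definition network_connectivity (Hs : seq nat) : Prop :=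
  forall n, n \in Hs -> forall a : {ffun 'I_d -> 'I_n},
    exists (S : {set N}) (e : rel N),
      [/\ symmetric e /\ (forall x y, e x y -> adj x y),
          (forall x y, e x y -> x \in S /\ y \in S),
          (forall x y, x \in S -> y \in S -> connect e x y),
          (forall x y, adj x y -> node_in_cube a x || node_in_cube a y -> e x y)
        & (forall x y, e x y -> node_in_patch a x && node_in_patch a y)].

Definition poincare_scaling (Hs : seq nat) : Prop :=
  exists mu : R, 0 < mu /\
    forall n, n \in Hs -> forall (a : {ffun 'I_d -> 'I_n}) (v : N -> R),
      exists c : R,
        semiM_on (node_in_cube a) (fun x => v x - c)
          <= mu * meshH n * semiL_on (node_in_patch a) v.

End Network.

(* Main.v *)
Require Import Defs.
From HB Require Import structures.
From mathcomp Require Import all_boot all_order all_algebra.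
From mathcomp Require Import boolp reals.
From mathcomp Require Import ring lra.
Import Order.TTheory GRing.Theory Num.Theory.
Local Open Scope ring_scope.
Set Implicit Arguments. Unset Strict Implicit. Unset Printing Implicit Defensive.

Section Generic.
Variables (R : realType) (N : finType).
Variable B : (N -> R) -> (N -> R) -> R.
Hypothesis lin1 : forall (a : R) u v w, B (fun x => a * u x + v x) w = a * B u w + B v w.
Hypothesis symB : forall u v, B u v = B v u.

Lemma B0 w : B (fun _ => 0) w = 0.
Proof.
have := lin1 1 (fun _ => 0) (fun _ => 0) w.
have -> : (fun x : N => 1 * (fun _ : N => 0) x + (fun _ : N => 0 : R) x) = (fun _ => 0).
  by apply: funext => x /=; rewrite mulr0 addr0.
rewrite mul1r => h; have : B (fun _ => 0) w + B (fun _ => 0) w - B (fun _ => 0) w = 0 by rewrite -h subrr. by rewrite addrK.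
Qed.

Lemma Bsum1 (I : Type) (s : seq I) (c : I -> R) (g : I -> N -> R) w :
  B (fun z => \sum_(i <- s) c i * g i z) w = \sum_(i <- s) c i * B (g i) w.
Proof.
elim: s => [|i s IH].
  rewrite big_nil; transitivity (B (fun _ => 0) w); last exact: B0.
  congr B; apply: funext => z; by rewrite big_nil.
rewrite big_cons -IH -lin1; congr B; apply: funext => z; by rewrite big_cons.
Qed.

Lemma Bsum2 (I : Type) (s : seq I) (c : I -> R) (g : I -> N -> R) u :
  B u (fun z => \sum_(i <- s) c i * g i z) = \sum_(i <- s) c i * B u (g i).
Proof.
rewrite symB Bsum1; apply: eq_bigr => i _; by rewrite symB.
Qed.

Lemma BD1 u v w : B (fun x => u x + v x) w = B u w + B v w.
Proof. rewrite -[B u w]mul1r -lin1; congr B; apply: funext => x; by rewrite mul1r. Qed.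

Lemma BB1 u v w : B (fun x => u x - v x) w = B u w - B v w.
Proof.
rewrite addrC -mulN1r -lin1; congr B; apply: funext => x; by rewrite mulN1r addrC.
Qed.

Lemma BB2 u v w : B w (fun x => u x - v x) = B w u - B w v.
Proof. by rewrite symB BB1 !(symB w). Qed.

Definition delta (y : N) : N -> R := fun z => if y == z then 1 else 0.

Lemma decomp (v : N -> R) : v = (fun z => \sum_y v y * delta y z).
Proof.
apply: funext => z; rewrite (bigD1 z) //= /delta eqxx mulr1 big1 ?addr0 // => y /negbTE.
by rewrite eq_sym => ->; rewrite mulr0.
Qed.

Lemma Bdecomp2 u v : B u v = \sum_y v y * B u (delta y).
Proof. by rewrite {1}(decomp v) Bsum2. Qed.

Lemma Bdecomp1 u v : B u v = \sum_y u y * B (delta y) v.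
Proof. by rewrite {1}(decomp u) Bsum1. Qed.

Hypothesis psd : forall u, 0 <= B u u.

Lemma CS a b : B a b <= Num.sqrt (B a a) * Num.sqrt (B b b).
Proof.
set p := B a a; set q := B b b; set r := B a b.
have key t : 0 <= p - 2 * t * r + t ^+ 2 * q.
  have := psd (fun x => (- t) * b x + a x).
  rewrite (lin1 (-t) b a) (symB b _) (lin1 (-t) b a b).
  rewrite (symB a (fun x => - t * b x + a x)) (lin1 (-t) b a a) -/p -/q -/r (symB b a) -/r.
  move=> h; apply: (le_trans h); rewrite le_eqVlt; apply/orP; left; apply/eqP; ring.
have hp : 0 <= p by apply: psd.
have hq : 0 <= q by apply: psd.
case: (lerP r 0) => hr.
  apply: le_trans hr _; apply: mulr_ge0; exact: sqrtr_ge0.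
rewrite -sqrtrM //; apply: le_trans (ler_norm r) _.
rewrite -sqrtr_sqr; apply: ler_wsqrtr.
have [q0|qpos] := eqVneq q 0.
  have := key ((p + 1) / (2 * r)); rewrite q0 mulr0 addr0.
  have -> : 2 * ((p + 1) / (2 * r)) * r = p + 1.
    by field; exact: lt0r_neq0.
  lra.
have qq : 0 < q by rewrite lt_def qpos.
have := key (r / q).
have -> : p - 2 * (r / q) * r + (r / q) ^+ 2 * q = p - r ^+ 2 / q by field.
move=> h.
have : r ^+ 2 / q <= p by lra.
by rewrite ler_pdivrMr // mulrC.
Qed.
End Generic.

Section Net.
Variables (R : realType) (d : nat) (N : finType) (pos : N -> 'I_d -> R) (adj : rel N)
  (gamma : N -> N -> R).

Lemma Klin1 : forall (a : R) u v w, Kform pos adj gamma (fun x => a * u x + v x) w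
   = a * Kform pos adj gamma u w + Kform pos adj gamma v w.
Proof.
move=> a u v w; rewrite /Kform /Kloc mulr_sumr -big_split /=; apply: eq_bigr => x _.
rewrite !mulr_sumr -!big_split /=; apply: eq_bigr => y _; ring.
Qed.

Lemma Ksym u v : Kform pos adj gamma u v = Kform pos adj gamma v u.
Proof. apply: eq_bigr => x _; congr (_ * _); apply: eq_bigr => y _; ring. Qed.

Lemma Mlin1 : forall (a : R) u v w, Mform pos adj (fun x => a * u x + v x) w
   = a * Mform pos adj u w + Mform pos adj v w.
Proof.
move=> a u v w; rewrite /Mform /Mloc mulr_sumr -big_split /=; apply: eq_bigr => x _.
rewrite !mulr_sumr -!big_split /=; apply: eq_bigr => y _; ring.
Qed.

Lemma Msym u v : Mform pos adj u v = Mform pos adj v u.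
Proof. apply: eq_bigr => x _; congr (_ * _); apply: eq_bigr => y _; ring. Qed.

Lemma dist_ge0 x y : 0 <= dist pos x y.
Proof. exact: sqrtr_ge0. Qed.

Lemma Mpsd u : 0 <= Mform pos adj u u.
Proof.
apply: sumr_ge0 => x _; apply: mulr_ge0; first by rewrite invr_ge0.
apply: sumr_ge0 => y _; rewrite -mulrA; apply: mulr_ge0; first exact: dist_ge0.
by rewrite -expr2 sqr_ge0.
Qed.

Lemma Lpsd u : 0 <= Lform pos adj u u.
Proof.
apply: sumr_ge0 => x _; apply: mulr_ge0; first by rewrite invr_ge0.
apply: sumr_ge0 => y _; apply: divr_ge0; last exact: dist_ge0.
by rewrite -expr2 sqr_ge0.
Qed.

Definition W x := 2^-1 * \sum_(y | adj x y) dist pos x y.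

Lemma W_ge0 x : 0 <= W x.
Proof. apply: mulr_ge0; first by rewrite invr_ge0. by apply: sumr_ge0 => y _; apply: dist_ge0. Qed.

Lemma MlocE x v w : Mloc pos adj x v w = W x * v x * w x.
Proof.
rewrite /Mloc /W -!mulrA; congr (_ * _); rewrite mulr_suml; apply: eq_bigr => y _; ring.
Qed.

Lemma coerc (alpha : R) :
  (forall x y, adj x y -> alpha <= gamma x y) ->
  forall u, alpha * Lform pos adj u u <= Kform pos adj gamma u u.
Proof.
move=> hg u; rewrite /Lform /Kform mulr_sumr; apply: ler_sum => x _.
rewrite /Lloc /Kloc mulrA (mulrC alpha) -mulrA; apply: ler_wpM2l; first by rewrite invr_ge0.
rewrite mulr_sumr; apply: ler_sum => y hy.
rewrite -!mulrA; apply: ler_wpM2r; last exact: hg.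
rewrite mulrA -expr2; apply: mulr_ge0; [exact: sqr_ge0 | rewrite invr_ge0; exact: dist_ge0].
Qed.

Lemma dist_gt0 : injective pos -> irreflexive adj -> forall x y, adj x y -> 0 < dist pos x y.
Proof.
move=> hinj hirr x y hxy; rewrite /dist sqrtr_gt0 lt_def; apply/andP; split; last first.
  by apply: sumr_ge0 => i _; apply: sqr_ge0.
apply/eqP => h0.
have hxy' : pos x = pos y.
  apply: funext => i; have := psumr_eq0P (fun i _ => sqr_ge0 (pos x i - pos y i)) h0 (i:=i) isT.
  by move/eqP; rewrite sqrf_eq0 subr_eq0 => /eqP.
by move: hxy; rewrite (hinj _ _ hxy') hirr.
Qed.

Lemma aux_cube (n ai bi : nat) (z H : R) : 0 < H -> (ai < bi)%N -> (bi < n)%N ->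
  (if ai.+1 == n then z <= ai%:R * H + H else z < ai%:R * H + H) -> bi%:R * H <= z -> False.
Proof.
move=> H0 hab hbn.
have -> : (ai.+1 == n) = false by apply/negbTE; rewrite neq_ltn (leq_ltn_trans hab hbn).
have : (ai.+1)%:R * H <= bi%:R * H by rewrite ler_pM2r // ler_nat.
rewrite -natr1 mulrDl mul1r; lra.
Qed.

Lemma cube_disj n (a b : {ffun 'I_d -> 'I_n}) (z : 'I_d -> R) :
  in_cube a z -> in_cube b z -> a = b.
Proof.
move=> /forallP ha /forallP hb; apply/ffunP => i; apply/val_inj => /=.
have H0 : 0 < meshH R n.
  by rewrite /meshH invr_gt0 ltr0n; exact: (leq_ltn_trans (leq0n _) (ltn_ord (a i))).
case/andP: (ha i) => ha1 ha2; case/andP: (hb i) => hb1 hb2.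
case: (ltngtP (a i) (b i)) => // h.
  by case: (aux_cube H0 h (ltn_ord (b i)) ha2 hb1).
by case: (aux_cube H0 h (ltn_ord (a i)) hb2 ha1).
Qed.

Section Pi.
Variable n : nat.
Definition cPi (h : N -> R) (a : {ffun 'I_d -> 'I_n}) : R :=
  if [exists y, node_in_cube pos a y] then
       Mform_on pos adj (node_in_cube pos a) h (fun _ => 1) /
       Mform_on pos adj (node_in_cube pos a) (fun _ => 1) (fun _ => 1)
     else 0.

Lemma PiHE h x : PiH pos adj n h x = \sum_a cPi h a * indic pos a x.
Proof. by []. Qed.

Lemma Pi_in h b x : node_in_cube pos b x -> PiH pos adj n h x = cPi h b.
Proof.
move=> hx; rewrite PiHE (bigD1 b) //= /indic hx mulr1 big1 ?addr0 // => a hab.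
suff -> : node_in_cube pos a x = false by rewrite mulr0.
apply/negbTE/negP => hax; by rewrite (cube_disj hax hx) eqxx in hab.
Qed.

Lemma PiH_orth (h : N -> R) (b : {ffun 'I_d -> 'I_n}) :
  Mform pos adj (fun x => h x - PiH pos adj n h x) (indic pos b) = 0.
Proof.
rewrite /Mform; under eq_bigr do rewrite MlocE.
case hE : [exists y, node_in_cube pos b y]; last first.
  apply: big1 => x _; move/negbT/existsPn: hE => /(_ x) hx.
  by rewrite /indic (negbTE hx) mulr0.
rewrite (bigID (node_in_cube pos b)) /= [X in _ + X]big1 ?addr0; last first.
  by move=> x /negbTE hx; rewrite /indic hx mulr0.
under eq_bigr => x hx do rewrite (Pi_in h hx) /indic hx mulr1.
rewrite /cPi hE /Mform_on.
under [X in _ / X]eq_bigr do rewrite MlocE !mulr1.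
have -> : \sum_(x0 | node_in_cube pos b x0) Mloc pos adj x0 h (fun=> 1) =
   \sum_(x | node_in_cube pos b x) W x * h x by apply: eq_bigr => x _; rewrite MlocE mulr1.
set Wb := \sum_(x | _) W x.
set Mh := \sum_(x | _) W x * h x.
under eq_bigr do rewrite mulrBr.
rewrite sumrB -/Mh -mulr_suml.
rewrite -/Wb.
have [W0|Wn0] := eqVneq Wb 0.
  have -> : Mh = 0.
    apply: big1 => x hx.
    by rewrite (psumr_eq0P (fun i _ => W_ge0 i) W0 hx) mul0r.
  by rewrite W0 !mul0r subrr.
by rewrite mulrC divfK // subrr.
Qed.

Lemma PiH_orth2 (h : N -> R) (v : N -> R) :
  Mform pos adj (fun x => h x - PiH pos adj n h x) (PiH pos adj n v) = 0.
Proof.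
have -> : PiH pos adj n v = (fun x => \sum_(a <- index_enum _) cPi v a * indic pos a x) by [].
rewrite (Bsum2 Mlin1 Msym); apply: big1 => a _; by rewrite PiH_orth mulr0.
Qed.
End Pi.
End Net.

Lemma solve_lin (R : realType) (N : finType) (F : (N -> R) -> N -> R) :
  (forall u y, F u y = \sum_x u x * F (delta R x) y) ->
  (forall u, (forall y, F u y = 0) -> forall y, u y = 0) ->
  forall b, exists u, forall y, F u y = b y.
Proof.
move=> hlin hinj b.
pose A : 'M[R]_#|N| := \matrix_(i, j) F (delta R (enum_val i)) (enum_val j).
pose fv (r : 'rV[R]_#|N|) : N -> R := fun x => r 0 (enum_rank x).
have key r y : F (fv r) y = (r *m A) 0 (enum_rank y).
  rewrite hlin mxE (reindex (@enum_rank N)) /=; last exact: onW_bij _ (@enum_rank_bij N).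
  apply: eq_bigr => x _; by rewrite mxE !enum_rankK.
have hdet : \det A != 0.
  apply/negP => /det0P [v vnz vA].
  have h0 : forall y, fv v y = 0 by apply: hinj => y; rewrite key vA mxE.
  move/eqP: vnz; apply; apply/rowP => i; rewrite mxE.
  by have := h0 (enum_val i); rewrite /fv enum_valK.
pose rb : 'rV[R]_#|N| := \row_j b (enum_val j).
exists (fv (rb *m invmx A)) => y.
rewrite key mulmxKV ?unitmxE ?unitfE // mxE enum_rankK //.
Qed.

Section Exist.
Variables (R : realType) (d : nat) (N : finType) (pos : N -> 'I_d -> R) (adj : rel N)
  (Gam : ('I_d -> R) -> Prop) (gamma : N -> N -> R) (alpha : R).
Hypotheses (hinj : injective pos) (hirr : irreflexive adj)
  (hcon : forall x y, connect adj x y) (hG : exists x, Gam (pos x))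
  (ha : 0 < alpha) (hg : forall x y, adj x y -> alpha <= gamma x y).

Local Notation K := (Kform pos adj gamma).
Let KL := Klin1 pos adj gamma.
Let KS := Ksym pos adj gamma.

Definition Fop (u : N -> R) (y : N) : R :=
  if `[< Gam (pos y) >] then u y else K u (delta R y).

Lemma path_const (u : N -> R) : (forall x y, adj x y -> u x = u y) ->
  forall p x, path adj x p -> u (last x p) = u x.
Proof.
move=> hu; elim=> [//|z p IH] x /= /andP [hxz hp].
by rewrite IH // -(hu _ _ hxz).
Qed.

Lemma Fop_inj u : (forall y, Fop u y = 0) -> forall y, u y = 0.
Proof.
move=> h0.
have hV : forall y, Gam (pos y) -> u y = 0.
  by move=> y hy; have := h0 y; rewrite /Fop (asboolT hy).
have hK : K u u = 0.
  rewrite (Bdecomp2 KL KS); apply: big1 => y _.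
  case: (asboolP (Gam (pos y))) => hy; first by rewrite hV // mul0r.
  by have := h0 y; rewrite /Fop (asboolF hy) => ->; rewrite mulr0.
have hL : Lform pos adj u u = 0.
  have := @coerc _ _ _ pos adj gamma alpha hg u; rewrite hK => h1.
  have := Lpsd pos adj u.
  by move: h1; rewrite pmulr_rle0 // => h1 h2; apply/eqP; rewrite eq_le h1 h2.
have hadj : forall x y, adj x y -> u x = u y.
  move=> x y hxy.
  have hx : Lloc pos adj x u u = 0.
    apply: (psumr_eq0P _ hL) => // i _.
    apply: mulr_ge0; first by rewrite invr_ge0.
    apply: sumr_ge0 => z _; apply: divr_ge0; last exact: dist_ge0.
    by rewrite -expr2 sqr_ge0.
  move: hx; rewrite /Lloc => /eqP; rewrite mulf_eq0 invr_eq0 pnatr_eq0 /=.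
  move=> /eqP hs.
  have hnn : forall z, adj x z -> 0 <= (u x - u z) * (u x - u z) / dist pos x z.
    move=> z hz; apply: divr_ge0; last exact: dist_ge0.
    by rewrite -expr2 sqr_ge0.
  have := psumr_eq0P hnn hs hxy.
  have hd := dist_gt0 hinj hirr hxy.
  move=> /eqP; rewrite mulf_eq0 invr_eq0 (gt_eqF hd) orbF mulf_eq0 orbb subr_eq0 => /eqP -> //.
case: hG => x0 hx0 y.
case/connectP: (hcon x0 y) => p hp ->.
by rewrite (path_const hadj hp) hV.
Qed.

Lemma Fop_lin u y : Fop u y = \sum_x u x * Fop (delta R x) y.
Proof.
rewrite /Fop; case: asboolP => hy.
  by rewrite {1}(decomp u).
exact: (Bdecomp1 KL).
Qed.

Lemma exists_sol q : exists w, solves pos adj Gam gamma q w.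
Proof.
pose b y := if `[< Gam (pos y) >] then 0 else Mform pos adj q (delta R y).
have [u hu] := solve_lin Fop_lin Fop_inj b.
exists u; split.
  by move=> x hx; have := hu x; rewrite /Fop /b (asboolT hx).
move=> v hv.
rewrite (Bdecomp2 KL KS) (Bdecomp2 (Mlin1 pos adj) (Msym pos adj)); apply: eq_bigr => y _.
case: (asboolP (Gam (pos y))) => hy; first by rewrite hv // !mul0r.
by have := hu y; rewrite /Fop /b (asboolF hy) => ->.
Qed.
End Exist.
Unset Implicit Arguments. Set Strict Implicit. Set Printing Implicit Defensive.

Theorem mainTheorem5 (R : realType) (d : nat) (N : finType)
  (pos : N -> 'I_d -> R) (adj : rel N) (Gam : ('I_d -> R) -> Prop)
  (gamma : N -> N -> R) (alpha beta : R) (Hs : seq nat) (CPi : R) :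
  (* graph: nodes are distinct points of [0,1]^d, at least two nodes,
     undirected simple connected graph *)
  injective pos ->
  (forall x i, 0 <= pos x i <= 1) ->
  (1 < #|N|)%N ->
  symmetric adj -> irreflexive adj ->
  (forall x y, connect adj x y) ->
  (* Gamma is a subset of the boundary of [0,1]^d with N(Gamma) nonempty *)
  (forall z, Gam z -> (forall i, 0 <= z i <= 1) /\ exists i, z i = 0 \/ z i = 1) ->
  (exists x, Gam (pos x)) ->
  (* coefficients *)
  0 < alpha -> alpha <= beta ->
  (forall x y, gamma x y = gamma y x) ->
  (forall x y, adj x y -> alpha <= gamma x y <= beta) ->
  (* admissible mesh sizes H = 1/n *)
  (forall n, n \in Hs -> (0 < n)%N) ->
  network_connectivity pos adj Hs ->
  poincare_scaling pos adj Hs ->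
  0 < CPi ->
  (forall (n : nat) (v : N -> R), n \in Hs ->
     semiM pos adj (fun x => v x - PiH pos adj n v x)
       <= CPi * meshH R n * semiL pos adj v) ->
  forall (n : nat) (f u uH : N -> R),
    n \in Hs ->
    solves pos adj Gam gamma f u ->
    inVH pos adj Gam gamma n uH ->
    (forall vH, inVH pos adj Gam gamma n vH ->
       Kform pos adj gamma uH vH = Mform pos adj f vH) ->
    semiL pos adj (fun x => u x - uH x)
      <= CPi * alpha^-1 * meshH R n * semiM pos adj (fun x => f x - PiH pos adj n f x)
    /\ CPi * alpha^-1 * meshH R n * semiM pos adj (fun x => f x - PiH pos adj n f x)
      <= CPi ^+ 2 * alpha^-1 * meshH R n ^+ 2 * semiL pos adj f.
Proof.
move=> hinj hbox hcard hsym hirr hcon hGam hGx ha hab hgsym hgam hHs hnet hpoinc hCPi hPi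
  n f u uH hn hu huH hgal.
have hg : forall x y, adj x y -> alpha <= gamma x y by move=> x y /hgam /andP [].
have KL := Klin1 pos adj gamma; have KS := Ksym pos adj gamma.
have ML := Mlin1 pos adj; have MS := Msym pos adj.
set e := fun x => u x - uH x.
case: (hu) => hVu hKu.
case: (huH) => g [hPg [hVuH hKuH]].
have hVe : inV pos Gam e by move=> x hx; rewrite /e hVu // hVuH // subr0.
have orth : forall q w, P0 pos n q -> solves pos adj Gam gamma q w -> Mform pos adj q e = 0.
  move=> q w hq [hVw hKw].
  rewrite -(hKw e hVe) /e (BB2 KL KS) (KS w u) (KS w uH) (hKu w hVw) hgal ?subrr //.
  by exists q.
have hge : Mform pos adj g e = 0 by apply: (orth g uH hPg); split.
have hPie : Mform pos adj (PiH pos adj n f) e = 0.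
  have [w hw] := exists_sol hinj hirr hcon hGx ha hg (PiH pos adj n f).
  apply: (orth _ w) => //; exists (cPi pos adj f) => x; exact: PiHE.
set r := fun x => f x - PiH pos adj n f x.
set s := fun x => e x - PiH pos adj n e x.
have hKe : Kform pos adj gamma e e = Mform pos adj r s.
  rewrite /e (BB1 KL) -/e (hKu e hVe) (hKuH e hVe) hge subr0.
  rewrite /s (BB2 ML MS e (PiH pos adj n e) r) /r PiH_orth2 subr0 (BB1 ML f (PiH pos adj n f) e) hPie subr0 //.
have hcs := CS ML MS (Mpsd pos adj) r s.
have hs := hPi n e hn. rewrite -/s in hs.
have hco := @coerc _ _ _ pos adj gamma alpha hg e.
rewrite -(sqr_sqrtr (Lpsd pos adj e)) in hco.
have hf := hPi n f hn. rewrite -/r in hf.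
rewrite -/(semiM pos adj r).
have hH : 0 < meshH R n by rewrite /meshH invr_gt0 ltr0n; exact: hHs.
set X := semiL pos adj e in hco hs *.
set A := semiM pos adj r in hcs hf *.
set Hh := meshH R n in hH hs hf *.
have hX : 0 <= X by apply: sqrtr_ge0.
have hA : 0 <= A by apply: sqrtr_ge0.
have hL : 0 <= semiL pos adj f by apply: sqrtr_ge0.
have hai : alpha * alpha^-1 = 1 by rewrite divff // gt_eqF.
have hai0 : 0 < alpha^-1 by rewrite invr_gt0.
rewrite -/(semiM pos adj s) in hcs.
have h1 : alpha * X ^+ 2 <= A * (CPi * Hh * X).
  rewrite hKe in hco; apply: (le_trans hco); apply: (le_trans hcs).
  by apply: ler_wpM2l.
split.
  have [X0|Xpos] := eqVneq X 0.
    rewrite X0; apply: mulr_ge0 => //; apply: mulr_ge0; last exact: ltW.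
    by apply: mulr_ge0; [exact: ltW | exact: ltW].
  have hXp : 0 < X by rewrite lt_def Xpos hX.
  have h2 : alpha * X <= A * CPi * Hh.
    rewrite -(ler_pM2r hXp).
    have -> : alpha * X * X = alpha * X ^+ 2 by ring.
    by have -> : A * CPi * Hh * X = A * (CPi * Hh * X) by ring.
  have h3 : X <= alpha^-1 * (A * CPi * Hh).
    have := ler_wpM2l (ltW hai0) h2; rewrite mulrA (mulrC alpha^-1) hai mul1r //.
  by have <- : alpha^-1 * (A * CPi * Hh) = CPi * alpha^-1 * Hh * A by ring.
have := ler_wpM2l (mulr_ge0 (mulr_ge0 (ltW hCPi) (ltW hai0)) (ltW hH)) hf.
have -> : CPi * alpha^-1 * Hh * (CPi * Hh * semiL pos adj f) = CPi ^+ 2 * alpha^-1 * Hh ^+ 2 * semiL pos adj f by ring.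
done.
Qed.
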